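(* Let $q$ be an odd prime power, $\mathbb F_q$ the finite field of order $q$, $d$ a positive integer, and $A\subset \mathbb F_q^d$. Let $\mathcal{SQ}(A)$ be the number of pairs $(x,y)\in A\times A$ such that $\eta(\|x-y\|)=1$. \begin{enumerate} \item If $d\equiv 2\pmod 4$ and $q\equiv 3\pmod 4$, then $$\mathcal{SQ}(A)\le \frac{|A|^2}{2} + \frac{q^{\frac{d}{2}} |A|}{2} -\frac{|A|^2}{2q}- \frac{q^{\frac{d-2}{2}}|A|}{2}.$$ \item Let $d\equiv 0\pmod 4$, or $d\equiv 2\pmod 4$ and $q\equiv 1\pmod 4$. If $|A|\ge (q^{d/2}+q)/(1+q^{-(d-2)/2})$, then $$\mathcal{SQ}(A)\le \frac{|A|^2}{2} + \frac{q^{\frac{d}{2}} |A|}{2}-\frac{|A|^2}{q^{\frac{d}{2}}} -\frac{|A|^2}{2q}+ \frac{q^{\frac{d-2}{2}}|A|}{2}.$$ If $|A|\le (q^{d/2}+q)/(1+q^{-(d-2)/2})$, then $$\mathcal{SQ}(A) \le \frac{|A|^2}{2} + \frac{q^{\frac{d}{2}} |A|}{2} - \frac{|A|^2}{2 q^{\frac{d}{2}}} -\frac{|A|}{2}.$$ \end{enumerate}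
   Context: For $x,y\in\mathbb F_q^d$, $\|x-y\|:=(x_1-y_1)^2+\cdots+(x_d-y_d)^2\in\mathbb F_q$. $\eta$ denotes the quadratic character of $\mathbb F_q$ (so $\eta(a)=1$ if $a$ is a nonzero square, $\eta(a)=-1$ if $a$ is a non-square) with the convention $\eta(0)=0$. *)

(* Defs.v *)
From HB Require Import structures.
From mathcomp Require Import all_boot all_order all_algebra all_field.
Set Implicit Arguments. Unset Strict Implicit. Unset Printing Implicit Defensive.
Import Order.TTheory GRing.Theory Num.Theory.
Local Open Scope ring_scope.

Definition eta (F : finFieldType) (a : F) : int :=
  if a == 0 then 0 else if [exists b : F, b ^+ 2 == a] then 1 else -1.

Definition qdist (F : finFieldType) (d : nat) (x y : 'rV[F]_d) : F :=
  \sum_(i < d) (x 0 i - y 0 i) ^+ 2.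

Definition SQ (F : finFieldType) (d : nat) (A : {set 'rV[F]_d}) : nat :=
  #|[set p : 'rV[F]_d * 'rV[F]_d |
      [&& p.1 \in A, p.2 \in A & eta (qdist p.1 p.2) == 1]]|.

(* Main.v *)
Require Import Defs.
From HB Require Import structures.
From mathcomp Require Import all_boot all_order all_algebra all_field.
From mathcomp Require Import cyclic zify ring.
Import Defs.
Import Order.TTheory GRing.Theory Num.Theory.
Set Implicit Arguments. Unset Strict Implicit. Unset Printing Implicit Defensive.
Local Open Scope ring_scope.

Section Euler.
Variable F : finFieldType.
Hypothesis qodd : odd #|F|.

Lemma two_neq0 : (2%:R : F) != 0.
Proof.
apply/negP => /eqP two0.
have [p pr_p chFp] := finPcharP F.
have ch2 : (2 \in [pchar F])%N by rewrite inE /= two0 eqxx.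
have p2 : p = 2%N.
  by have := pcharf_eq chFp 2; rewrite ch2 => /esym; rewrite inE => /eqP.
have cF : #|F| = (p ^ logn p #|F|)%N := card_pprimeChar chFp.
move: qodd; rewrite cF p2 oddX /= orbF => /eqP n0.
have := finNzRing_gt1 F.
by rewrite cF p2 n0.
Qed.

Lemma fermat (x : F) : x != 0 -> x ^+ #|F|.-1 = 1.
Proof.
move=> nz; apply: (mulIf nz); rewrite mul1r -exprSr prednK ?expf_card //.
exact: ltnW (finNzRing_gt1 F).
Qed.

Lemma prim_root_F : exists z : F, (#|F|.-1).-primitive_root z.
Proof.
pose rs := enum (predC1 (0:F)).
have q1 : (0 < #|F|.-1)%N by rewrite -ltnS prednK ?finNzRing_gt1 // ltnW // finNzRing_gt1.
have : has (#|F|.-1).-primitive_root rs.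
  apply: has_prim_root => //.
  - apply/allP => x; rewrite mem_enum /= => nz.
    by rewrite unity_rootE fermat.
  - exact: enum_uniq.
  - by rewrite -cardE cardC1.
by case/hasP => z _ pz; exists z.
Qed.

Lemma m1_neq1 : (-1 : F) != 1.
Proof.
apply/negP => /eqP h; move: two_neq0.
by rewrite mulrS mulr1n {1}(_ : 1 = -1) // addNr eqxx.
Qed.

Lemma q_gt1 : (1 < #|F|)%N. Proof. exact: finNzRing_gt1. Qed.

Definition kq := (#|F|.-1)./2.

Lemma kq2 : (kq * 2 = #|F|.-1)%N.
Proof.
have := odd_double_half #|F|.-1.
have : odd #|F|.-1 = false.
  by move: qodd; rewrite -{1}(prednK (ltnW q_gt1)) /= => /negbTE.
by rewrite /kq => -> /=; rewrite add0n -muln2.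
Qed.

Lemma kq_gt0 : (0 < kq)%N.
Proof.
have := kq2; case: kq => //= h.
have := q_gt1; rewrite -(prednK (ltnW q_gt1)) -h //.
Qed.

Lemma euler (a : F) : a != 0 ->
  (a ^+ kq = 1 /\ [exists b : F, b ^+ 2 == a]) \/
  (a ^+ kq = -1 /\ ~~ [exists b : F, b ^+ 2 == a]).
Proof.
move=> nz.
have [z pz] := prim_root_F.
have [i ai] := prim_rootP pz (fermat nz).
have zk : z ^+ kq = -1.
  have h1 : (z ^+ kq) ^+ 2 == 1 by rewrite -exprM kq2 prim_expr_order.
  have h2 : z ^+ kq != 1.
    rewrite -(expr0 z) (eq_prim_root_expr pz) mod0n modn_small.
      by rewrite -lt0n kq_gt0.
    by rewrite -kq2 -{1}(muln1 kq) ltn_mul2l kq_gt0.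
  by move: h1; rewrite sqrf_eq1 (negbTE h2) => /eqP.
have ak : (z ^+ i) ^+ kq = (-1) ^+ (odd i).
  by rewrite -exprM mulnC exprM zk signr_odd.
rewrite ai ak.
case oi: (odd i) => /=.
  right; split; first by rewrite expr1.
  apply/negP => /existsP [b /eqP b2].
  have bnz : b != 0 by apply: contra_neq nz => b0; rewrite ai -b2 b0 expr0n.
  move: ak; rewrite oi expr1 -b2 -exprM mulnC kq2 fermat // => h.
  by move: m1_neq1; rewrite -h eqxx.
left; split; first by [].
apply/existsP; exists (z ^+ i./2); rewrite -exprM muln2.
by rewrite -{2}(odd_double_half i) oi add0n.
Qed.

End Euler.

Section Eta.
Variable F : finFieldType.
Hypothesis qodd : odd #|F|.

Lemma eta0 : eta (0 : F) = 0. Proof. by rewrite /eta eqxx. Qed.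

Lemma eta_nz (a : F) : a != 0 -> eta a = 1 \/ eta a = -1.
Proof. by rewrite /eta => /negbTE ->; case: ifP; [left|right]. Qed.

Lemma eta_pow (a : F) : a != 0 -> a ^+ kq F = (eta a)%:~R.
Proof.
move=> nz; rewrite /eta (negbTE nz).
by case: (euler qodd nz) => [[-> ->]|[-> /negbTE ->]].
Qed.

Lemma pm1_inj (u v : int) : (u = 1 \/ u = -1) -> (v = 1 \/ v = -1) ->
  (u%:~R : F) = v%:~R -> u = v.
Proof.
have m1 := m1_neq1 qodd.
case=> ->; case=> -> //= h; exfalso; move: m1.
  by rewrite [X in X != _](_ : _ = (1 : F)) ?eqxx // -h.
by rewrite [X in X != _](_ : _ = (1 : F)) ?eqxx // h.
Qed.

Lemma eta_mul (a b : F) : eta (a * b) = eta a * eta b.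
Proof.
have [->|na] := eqVneq a 0; first by rewrite mul0r eta0 mul0r.
have [->|nb] := eqVneq b 0; first by rewrite mulr0 eta0 mulr0.
have nab : a * b != 0 by rewrite mulf_neq0.
apply: pm1_inj; first exact: eta_nz.
  by case: (eta_nz na) => ->; case: (eta_nz nb) => ->; rewrite ?mulN1r ?opprK ?mulr1; auto.
by rewrite -eta_pow // exprMn !eta_pow // intrM.
Qed.

Lemma eta1 : eta (1 : F) = 1.
Proof.
rewrite /eta oner_eq0; case: existsP => // [[]]; exists 1.
by rewrite expr1n.
Qed.

Lemma eta_sq (a : F) : a != 0 -> eta (a ^+ 2) = 1.
Proof. by move=> nz; rewrite expr2 eta_mul; case: (eta_nz nz) => ->. Qed.

Lemma eta_inv (a : F) : eta (a^-1) = eta a.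
Proof.
have [->|nz] := eqVneq a 0; first by rewrite invr0.
have := eta_mul a a^-1; rewrite mulfV // eta1.
by case: (eta_nz nz) => -> ; case: (eta_nz (invr_neq0 nz)) => ->.
Qed.

Lemma eta_m1 : eta (-1 : F) = (-1) ^+ kq F.
Proof.
have nz : (-1 : F) != 0 by rewrite oppr_eq0 oner_eq0.
apply: pm1_inj; first exact: eta_nz.
  by rewrite -signr_odd; case: odd; rewrite ?expr1 ?expr0; auto.
by rewrite -eta_pow // rmorphXn /= rmorphN1.
Qed.

Lemma card_sqrt (a : F) :
  (#|[set x : F | x ^+ 2 == a]| : int) = 1 + eta a.
Proof.
have [->|nz] := eqVneq a 0.
  rewrite eta0 addr0.
  have -> : [set x : F | x ^+ 2 == 0] = [set 0].
    by apply/setP => x; rewrite !inE sqrf_eq0.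
  by rewrite cards1.
rewrite /eta (negbTE nz).
case: existsP => [[b /eqP b2]|nsq].
  have bnz : b != 0 by apply: contra_neq nz => b0; rewrite -b2 b0 expr0n.
  have -> : [set x : F | x ^+ 2 == a] = [set b; -b].
    apply/setP => x; rewrite !inE -b2 -subr_eq0 subr_sqr mulf_eq0 subr_eq0.
    by rewrite addr_eq0.
  rewrite cards2.
  have -> : (b != - b) = true.
    apply/negP => /eqP h; move: bnz.
    have : b + b = 0 by rewrite {2}h subrr.
    rewrite -mulr2n -mulr_natr => /eqP; rewrite mulf_eq0 (negbTE (two_neq0 qodd)) orbF.
    by move=> ->.
  by [].
have -> : [set x : F | x ^+ 2 == a] = set0.
  by apply/setP => x; rewrite !inE; apply/negP => h; apply: nsq; exists x.
by rewrite cards0.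
Qed.

Lemma sum_eta : \sum_(a : F) (eta a) = 0.
Proof.
have [z pz] := prim_root_F F.
have znz : z != 0.
  by rewrite (prim_root_eq0 pz) -lt0n -ltnS prednK ?q_gt1 // ltnW // q_gt1.
have ez : eta z = -1.
  case: (eta_nz znz) => // h; exfalso.
  have := eta_pow znz; rewrite h.
  apply/eqP; rewrite -(expr0 z) (eq_prim_root_expr pz) mod0n modn_small.
    by rewrite -lt0n kq_gt0.
  by rewrite -(kq2 qodd) -{1}(muln1 (kq F)) ltn_mul2l kq_gt0.
have : \sum_(a : F) eta a = \sum_(a : F) eta (z * a).
  by rewrite (reindex_inj (mulfI znz)).
under [in RHS]eq_bigr do rewrite eta_mul ez.
rewrite -mulr_sumr mulN1r; move: (\sum_a eta a) => S h; lia.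
Qed.

End Eta.
Lemma addchar_exists (F : finFieldType) :
  exists psi : F -> algC,
    [/\ forall x y, psi (x + y) = psi x * psi y, psi 0 = 1,
        exists b, psi b != 1 &
        forall x, (psi x)^* = psi (- x) ].
Proof.
have [p pr_p chFp] := finPcharP F.
pose R := pPrimeCharType chFp.
pose N := (Zp_trunc (pdiv p)).+2.
have [w wN] := C_prim_root_exists (isT : (0 < N)%N).
have [v2r v2r_lin v2r_bij] := pprimeChar_vectAxiom chFp.
set n := logn p #|R| in v2r v2r_lin v2r_bij.
have v2rD : forall x y : R, v2r (x + y) = v2r x + v2r y.
  by move=> x y; rewrite -[x in LHS]scale1r v2r_lin scale1r.
have v2r0 : v2r 0 = 0.
  have h := v2rD 0 0; rewrite addr0 in h; apply: (addrI (v2r 0)); by rewrite addr0 -h.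
have [r2v v2rK r2vK] := v2r_bij.
have [n0|n_gt0] := posnP n.
  exfalso.
  have H : forall u v : 'rV['F_p]_n, u = v.
    by rewrite n0 => u v; rewrite (thinmx0 u) (thinmx0 v).
  have := can_inj v2rK (H (v2r 0) (v2r 1)).
  by move/eqP; rewrite eq_sym oner_eq0.
pose i0 := Ordinal n_gt0.
pose psi (x : F) := w ^+ (nat_of_ord (v2r (x : R) 0 i0)).
have psiD : forall x y, psi (x + y) = psi x * psi y.
  move=> x y; rewrite /psi -exprD (v2rD x y) mxE -(prim_expr_mod wN (_ + _)%N).
  by [].
have psiN : forall x, psi x ^+ N = 1.
  by move=> x; rewrite /psi -exprM mulnC exprM (prim_expr_order wN) expr1n.
have psi0 : psi 0 = 1.
  by rewrite /psi v2r0 mxE.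
exists psi; split => //.
  exists (r2v (const_mx 1 : 'rV['F_p]_n) : F).
  rewrite /psi r2vK mxE /=.
  by rewrite modn_small // -[X in _ != X](expr0 w) (eq_prim_root_expr wN) mod0n modn_small.
move=> x.
have n1 : `|psi x| = 1.
  apply/eqP; rewrite -(pexpr_eq1 (isT : (0 < N)%N)) ?normr_ge0 //.
  by rewrite -normrX psiN normr1.
have : psi x * (psi x)^* = 1 by rewrite -normCK n1 expr1n.
have : psi x * psi (- x) = 1 by rewrite -psiD subrr psi0.
move=> h1 h2.
have nz : psi x != 0 by rewrite -normr_eq0 n1 oner_eq0.
by apply: (mulfI nz); rewrite h1 h2.
Qed.

Section Gauss.
Variable F : finFieldType.
Hypothesis qodd : odd #|F|.
Variable psi : F -> algC.
Hypothesis psiD : forall x y, psi (x + y) = psi x * psi y.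
Hypothesis psi0 : psi 0 = 1.
Variable b0 : F.
Hypothesis psib : psi b0 != 1.
Hypothesis psiC : forall x, (psi x)^* = psi (- x).

Definition et (a : F) : algC := (eta a)%:~R.

Lemma et0 : et 0 = 0. Proof. by rewrite /et eta0. Qed.
Lemma et1 : et 1 = 1. Proof. by rewrite /et eta1. Qed.
Lemma et_mul a b : et (a * b) = et a * et b.
Proof. by rewrite /et eta_mul // intrM. Qed.
Lemma et_inv a : et (a^-1) = et a.
Proof. by rewrite /et eta_inv. Qed.
Lemma et_sqr a : a != 0 -> et a * et a = 1.
Proof. by move=> nz; rewrite -et_mul -expr2 /et eta_sq. Qed.
Lemma et_conj a : (et a)^* = et a.
Proof. by rewrite /et rmorph_int. Qed.
Lemma sum_et : \sum_a et a = 0.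
Proof. by rewrite /et -rmorph_sum /= sum_eta. Qed.

Lemma psiN x : psi x * psi (- x) = 1.
Proof. by rewrite -psiD subrr psi0. Qed.

Lemma psi_sum (c : F) : \sum_a psi (c * a) = if c == 0 then (#|F|%:R) else 0.
Proof.
have [->|nz] := eqVneq c 0.
  by under eq_bigr do rewrite mul0r psi0; rewrite sumr_const.
rewrite (reindex_inj (mulfI (invr_neq0 nz))) /=.
under eq_bigr do rewrite mulVKf //.
set S := \sum_a psi a.
have : S = psi b0 * S.
  rewrite {1}/S (reindex_inj (addrI b0)) /= mulr_sumr.
  by under eq_bigr do rewrite psiD.
move/eqP; rewrite -subr_eq0 -{1}(mul1r S) -mulrBl mulf_eq0 subr_eq0 eq_sym.
by rewrite (negbTE psib) /= => /eqP.
Qed.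

Definition G := \sum_a et a * psi a.

Lemma gauss_scale (s : F) : \sum_a et a * psi (s * a) = et s * G.
Proof.
have [->|nz] := eqVneq s 0.
  under eq_bigr do rewrite mul0r psi0 mulr1.
  by rewrite sum_et et0 mul0r.
rewrite (reindex_inj (mulfI (invr_neq0 nz))) /=.
under eq_bigr do rewrite mulVKf // et_mul et_inv -mulrA.
by rewrite -mulr_sumr.
Qed.

Lemma G_conj : G^* = et (-1) * G.
Proof.
rewrite -gauss_scale /G rmorph_sum /=.
by apply: eq_bigr => a _; rewrite rmorphM /= et_conj psiC mulN1r.
Qed.

Lemma GGc : G * G^* = (#|F|%:R).
Proof.
have step : forall b, et b * psi (- b) * G = \sum_a et a * psi (b * (a - 1)).
  move=> b; have [->|nz] := eqVneq b 0.
    rewrite et0 !mul0r; under eq_bigr do rewrite mul0r psi0 mulr1.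
    by rewrite sum_et.
  have hG : G = et b * \sum_a et a * psi (b * a).
    by rewrite gauss_scale mulrA et_sqr // mul1r.
  rewrite hG; set S := \sum_a _.
  have -> : et b * psi (- b) * (et b * S) = (et b * et b) * (psi (-b) * S) by ring.
  rewrite et_sqr // mul1r /S mulr_sumr.
  apply: eq_bigr => a _; rewrite mulrCA -psiD.
  by rewrite mulrBr mulr1 addrC.
rewrite /G [in X in _ * X]rmorph_sum mulr_sumr /=.
have -> : \sum_i G * (et i * psi i)^* = \sum_i et i * psi (- i) * G.
  by apply: eq_bigr => i _; rewrite rmorphM /= et_conj psiC mulrC.
under eq_bigr do rewrite step.
rewrite exchange_big /=.
have -> : \sum_a \sum_b et a * psi (b * (a - 1)) =
          \sum_a et a * (if a - 1 == 0 then (#|F|%:R) else 0).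
  apply: eq_bigr => a _; rewrite -mulr_sumr; congr (_ * _).
  by rewrite -psi_sum; apply: eq_bigr => b _; rewrite mulrC.
rewrite (bigD1 1) //= subrr eqxx et1 mul1r big1 ?addr0 //.
by move=> a /negbTE a1; rewrite subr_eq0 a1 mulr0.
Qed.

Lemma G2 : G ^+ 2 = et (-1) * (#|F|%:R).
Proof.
have nz1 : (-1 : F) != 0 by rewrite oppr_eq0 oner_eq0.
rewrite -GGc G_conj; have := et_sqr nz1; move: (et (-1)) => e he.
by transitivity (e * e * G ^+ 2); [rewrite he mul1r | ring].
Qed.

Lemma G_neq0 : G != 0.
Proof.
apply/negP => /eqP g0; have := GGc; rewrite g0 mul0r => /eqP.
by rewrite eq_sym pnatr_eq0; move: (q_gt1 F); case: #|F|.
Qed.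

End Gauss.

Section Quad.
Variable F : finFieldType.
Hypothesis qodd : odd #|F|.
Variable psi : F -> algC.
Hypothesis psiD : forall x y, psi (x + y) = psi x * psi y.
Hypothesis psi0 : psi 0 = 1.
Variable b0 : F.
Hypothesis psib : psi b0 != 1.
Hypothesis psiC : forall x, (psi x)^* = psi (- x).

Local Notation et := (@et F).
Local Notation G := (G psi).

Lemma sum_sq (f : F -> algC) : \sum_x f (x ^+ 2) = \sum_a (1 + et a) * f a.
Proof.
rewrite (partition_big (fun x => x ^+ 2) predT) //=.
apply: eq_bigr => a _.
transitivity (\sum_(x in [set x : F | x ^+ 2 == a]) f a).
  by apply: eq_big => [x|x /eqP ->]; rewrite ?inE.
rewrite sumr_const -mulr_natl; congr (_ * _).
by rewrite /et -[1]/((1 : int)%:~R) -rmorphD /= -card_sqrt // -pmulrn.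
Qed.

Lemma quad_sum (s : F) : s != 0 -> \sum_x psi (s * x ^+ 2) = et s * G.
Proof.
move=> nz.
rewrite (sum_sq (fun a => psi (s * a))).
under eq_bigr do rewrite mulrDl mul1r.
rewrite big_split /= (psi_sum psiD psi0 psib) (negbTE nz) add0r.
exact: gauss_scale.
Qed.

Lemma quad_lin (s c : F) : s != 0 ->
  \sum_x psi (s * x ^+ 2 + c * x) = et s * G * psi (- (c ^+ 2 / (4%:R * s))).
Proof.
move=> nz.
have two := two_neq0 qodd.
pose t := c / (2%:R * s).
rewrite (reindex_inj (addIr (- t))) /=.
have e : forall x, s * (x - t) ^+ 2 + c * (x - t) = s * x ^+ 2 + (- (c ^+ 2 / (4%:R * s))).
  move=> x; rewrite /t.
  have four : (4%:R : F) != 0.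
    by rewrite (_ : 4%:R = 2%:R * 2%:R) ?mulf_neq0 // -natrM.
  field.
  by rewrite nz four two.
under eq_bigr do rewrite e psiD.
by rewrite -mulr_suml quad_sum.
Qed.

End Quad.

Section Vec.
Variable F : finFieldType.
Hypothesis qodd : odd #|F|.
Variable psi : F -> algC.
Hypothesis psiD : forall x y, psi (x + y) = psi x * psi y.
Hypothesis psi0 : psi 0 = 1.
Variable b0 : F.
Hypothesis psib : psi b0 != 1.
Hypothesis psiC : forall x, (psi x)^* = psi (- x).
Variable d : nat.

Local Notation et := (@et F).
Local Notation G := (G psi).

Definition dot (m v : 'rV[F]_d) := \sum_i m 0 i * v 0 i.
Definition nrm (v : 'rV[F]_d) := \sum_i v 0 i ^+ 2.

Lemma qdistE (x y : 'rV[F]_d) : qdist x y = nrm (x - y).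
Proof. by apply: eq_bigr => i _; rewrite !mxE. Qed.

Lemma prod_sum_rV (h : 'I_d -> F -> algC) :
  \sum_(m : 'rV[F]_d) \prod_i h i (m 0 i) = \prod_i \sum_a h i a.
Proof.
rewrite bigA_distr_bigA /=.
rewrite (reindex (fun f : {ffun 'I_d -> F} => \row_i f i)) /=.
  by apply: eq_bigr => f _; apply: eq_bigr => i _; rewrite mxE.
exists (fun m : 'rV[F]_d => [ffun i => m 0 i]) => [f _|m _].
  by apply/ffunP => i; rewrite ffunE mxE.
by apply/rowP => i; rewrite mxE ffunE.
Qed.

Lemma psi_big (I : Type) (r : seq I) (P : pred I) (f : I -> F) :
  psi (\sum_(i <- r | P i) f i) = \prod_(i <- r | P i) psi (f i).
Proof. exact: (big_morph psi psiD psi0). Qed.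

Definition rr (s : F) : F := - (4%:R * s)^-1.

Lemma key (s : F) (v : 'rV[F]_d) : s != 0 -> ~~ odd d ->
  \sum_(m : 'rV[F]_d) psi (rr s * nrm m + dot m v) = G ^+ d * psi (s * nrm v).
Proof.
move=> nz ev.
have two := two_neq0 qodd.
have four : (4%:R : F) != 0.
  by rewrite (_ : 4%:R = 2%:R * 2%:R) ?mulf_neq0 // -natrM.
have rnz : rr s != 0 by rewrite /rr oppr_eq0 invr_eq0 mulf_neq0.
have hm : forall m, rr s * nrm m + dot m v = \sum_i (rr s * m 0 i ^+ 2 + v 0 i * m 0 i).
  move=> m; rewrite big_split /= mulr_sumr; congr (_ + _).
  by apply: eq_bigr => i _; rewrite mulrC.
under eq_bigr do rewrite hm psi_big.
rewrite (prod_sum_rV (fun i a => psi (rr s * a ^+ 2 + v 0 i * a))).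
under eq_bigr do rewrite (quad_lin qodd psiD psi0 psib) //.
rewrite big_split /= prodr_const card_ord exprMn.
have -> : et (rr s) ^+ d = 1.
  by rewrite -(odd_double_half d) (negbTE ev) add0n -muln2 mulnC exprM expr2 et_sqr // expr1n.
rewrite mul1r /nrm mulr_sumr psi_big; congr (_ * _).
apply: eq_bigr => i _; congr (psi _).
rewrite /rr; field.
by rewrite nz four oppr_eq0 oner_eq0.
Qed.

Lemma orth_rV (v : 'rV[F]_d) :
  \sum_(m : 'rV[F]_d) psi (dot m v) = if v == 0 then (#|F| ^ d)%:R else 0.
Proof.
under eq_bigr do rewrite /dot psi_big.
rewrite (prod_sum_rV (fun i a => psi (a * v 0 i))).
under eq_bigr do (under eq_bigr do rewrite mulrC; rewrite (psi_sum psiD psi0 psib)).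
have [->|nz] := eqVneq v 0.
  under eq_bigr do rewrite mxE eqxx.
  by rewrite prodr_const card_ord natrX.
have [i vi] : exists i, v 0 i != 0.
  apply/existsP; apply: contraR nz; rewrite negb_exists => /forallP h.
  by apply/eqP/rowP => i; rewrite mxE; apply/eqP; have := h i; rewrite negbK.
by rewrite (bigD1 i) //= (negbTE vi) mul0r.
Qed.

Variable A : {set 'rV[F]_d}.

Definition fA (m : 'rV[F]_d) := \sum_(x in A) psi (dot m x).
Definition PP (m : 'rV[F]_d) := fA m * (fA m)^*.

Lemma PP_ge0 m : 0 <= PP m. Proof. exact: mul_conjC_ge0. Qed.

Lemma dotB (m x y : 'rV[F]_d) : dot m (x - y) = dot m x - dot m y.
Proof.
rewrite /dot -sumrB; apply: eq_bigr => i _; rewrite !mxE; ring.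
Qed.

Lemma dot0 (x : 'rV[F]_d) : dot 0 x = 0.
Proof. by rewrite /dot big1 // => i _; rewrite mxE mul0r. Qed.

Lemma nrm0 : nrm 0 = 0.
Proof. by rewrite /nrm big1 // => i _; rewrite mxE expr0n. Qed.

Lemma PPE m : PP m = \sum_(x in A) \sum_(y in A) psi (dot m (x - y)).
Proof.
rewrite /PP /fA rmorph_sum /= mulr_suml; apply: eq_bigr => x _.
rewrite mulr_sumr; apply: eq_bigr => y _.
by rewrite psiC dotB -psiD.
Qed.

Lemma PP0 : PP 0 = (#|A| ^ 2)%:R.
Proof.
rewrite PPE.
under eq_bigr do under eq_bigr do rewrite dot0 psi0.
by rewrite sumr_const sumr_const -mulrnA mulnn.
Qed.

Lemma sum_PP : \sum_m PP m = (#|F| ^ d * #|A|)%:R.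
Proof.
under eq_bigr do rewrite PPE.
rewrite exchange_big /=.
under eq_bigr do rewrite exchange_big /=.
have h : forall x, x \in A -> \sum_(y in A) \sum_m psi (dot m (x - y)) = (#|F| ^ d)%:R.
  move=> x xA; under eq_bigr do rewrite orth_rV subr_eq0.
  rewrite (bigD1 x) //= eqxx big1 ?addr0 //.
  by move=> y /andP [_ /negbTE]; rewrite eq_sym => ->.
rewrite (eq_bigr _ h) sumr_const.
by rewrite -mulrnA.
Qed.

Definition TT (s : F) := \sum_(x in A) \sum_(y in A) psi (s * qdist x y).

Lemma TT_key (s : F) : s != 0 -> ~~ odd d ->
  G ^+ d * TT s = \sum_m psi (rr s * nrm m) * PP m.
Proof.
move=> nz ev.
rewrite /TT mulr_sumr.
under eq_bigr do rewrite mulr_sumr.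
under eq_bigr do under eq_bigr do rewrite qdistE -key //.
under [in RHS]eq_bigr do rewrite PPE mulr_sumr.
rewrite [RHS]exchange_big /=; apply: eq_bigr => x _.
under [in RHS]eq_bigr do rewrite mulr_sumr.
rewrite [RHS]exchange_big /=; apply: eq_bigr => y _.
by apply: eq_bigr => m _; rewrite psiD.
Qed.

End Vec.

Section Formulas.
Variable F : finFieldType.
Hypothesis qodd : odd #|F|.
Variable psi : F -> algC.
Hypothesis psiD : forall x y, psi (x + y) = psi x * psi y.
Hypothesis psi0 : psi 0 = 1.
Variable b0 : F.
Hypothesis psib : psi b0 != 1.
Hypothesis psiC : forall x, (psi x)^* = psi (- x).
Variable d : nat.
Hypothesis ev : ~~ odd d.
Variable A : {set 'rV[F]_d}.

Local Notation et := (@et F).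
Local Notation G := (G psi).
Local Notation TT := (TT psi A).
Local Notation PP := (PP psi A).
Local Notation nrm := (@nrm F d).

Lemma rr_inv (s n : F) : rr (s^-1) * n = (- (n / 4%:R)) * s.
Proof. by rewrite /rr invfM invrK; ring. Qed.

Lemma et4 : et (4%:R)^-1 = 1.
Proof.
have h : forall x : F, x = 2%:R * 2%:R -> et x^-1 = 1.
  by move=> x ->; rewrite (et_inv qodd) (et_mul qodd) (et_sqr qodd) // two_neq0.
by apply: h; rewrite -natrM.
Qed.

Lemma sum_et_rr (n : F) : \sum_s et s * psi (rr s * n) = et (- n) * G.
Proof.
rewrite (reindex_inj invr_inj) /=.
under eq_bigr do rewrite (et_inv qodd) rr_inv.
by rewrite (gauss_scale qodd psi0) -mulNr (et_mul qodd) et4 mulr1.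
Qed.

Lemma sum_psi_rr (n : F) : \sum_s psi (rr s * n) = if n == 0 then (#|F|%:R) else 0.
Proof.
rewrite (reindex_inj invr_inj) /=.
under eq_bigr do rewrite rr_inv.
rewrite (psi_sum psiD psi0 psib) oppr_eq0 mulf_eq0 invr_eq0.
have four : (4%:R : F) != 0.
  by rewrite (_ : 4%:R = 2%:R * 2%:R) ?mulf_neq0 ?two_neq0 // -natrM.
by rewrite (negbTE four) orbF.
Qed.

Definition Sf := \sum_(x in A) \sum_(y in A) et (qdist x y).
Definition Sz := \sum_(x in A) \sum_(y in A) ((qdist x y == 0)%:R : algC).

Lemma swap3 (f : 'rV[F]_d -> 'rV[F]_d -> F -> algC) :
  \sum_(x in A) \sum_(y in A) \sum_a f x y a =
  \sum_a \sum_(x in A) \sum_(y in A) f x y a.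
Proof.
rewrite [RHS]exchange_big /=; apply: eq_bigr => x _.
by rewrite [RHS]exchange_big.
Qed.

Lemma Sf_TT : Sf * G = \sum_a et a * TT a.
Proof.
rewrite /Sf mulr_suml; under eq_bigr do rewrite mulr_suml.
under eq_bigr do under eq_bigr do rewrite -(gauss_scale qodd psi0).
rewrite swap3; apply: eq_bigr => a _.
rewrite /TT mulr_sumr; apply: eq_bigr => x _.
by rewrite mulr_sumr; apply: eq_bigr => y _; rewrite (mulrC a).
Qed.

Lemma Sz_TT : Sz * (#|F|%:R) = \sum_a TT a.
Proof.
rewrite /Sz mulr_suml; under eq_bigr do rewrite mulr_suml.
have h : forall t : F, (t == 0)%:R * (#|F|%:R : algC) = \sum_a psi (a * t).
  move=> t; under eq_bigr do rewrite mulrC.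
  by rewrite (psi_sum psiD psi0 psib); case: (t == 0); rewrite ?mul1r ?mul0r.
under eq_bigr do under eq_bigr do rewrite h.
by rewrite swap3.
Qed.

Lemma Sf_formula : G ^+ d * Sf = \sum_m et (- nrm m) * PP m.
Proof.
apply: (mulIf (G_neq0 qodd psiD psi0 psib psiC)).
rewrite -mulrA Sf_TT mulr_sumr.
have E : forall a, G ^+ d * (et a * TT a) = et a * \sum_m psi (rr a * nrm m) * PP m.
  move=> a; have [->|nz] := eqVneq a 0; first by rewrite et0 !mul0r mulr0.
  by rewrite mulrCA (TT_key qodd psiD psi0 psib psiC).
under eq_bigr do rewrite E mulr_sumr.
rewrite exchange_big /= mulr_suml; apply: eq_bigr => m _.
under eq_bigr do rewrite mulrA.
by rewrite -mulr_suml sum_et_rr mulrAC.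
Qed.

Lemma TT0 : TT 0 = (#|A| ^ 2)%:R.
Proof.
rewrite /TT.
under eq_bigr do under eq_bigr do rewrite mul0r psi0.
by rewrite sumr_const sumr_const -mulrnA mulnn.
Qed.

Lemma Sz_formula : G ^+ d * Sz * (#|F|%:R) =
  G ^+ d * (#|A| ^ 2)%:R + \sum_m ((nrm m == 0)%:R * (#|F|%:R) - 1) * PP m.
Proof.
rewrite -mulrA Sz_TT mulr_sumr (bigD1 0) //= TT0; congr (_ + _).
have E : forall a, a != 0 -> G ^+ d * TT a = \sum_m psi (rr a * nrm m) * PP m.
  by move=> a nz; rewrite (TT_key qodd psiD psi0 psib psiC).
rewrite (eq_bigr _ E) exchange_big /=; apply: eq_bigr => m _.
rewrite -mulr_suml; congr (_ * _).
have rr0 : rr (0 : F) = 0 by rewrite /rr mulr0 invr0 oppr0.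
have := sum_psi_rr (nrm m); rewrite (bigD1 0) //= rr0 mul0r psi0.
move=> h; apply: (addrI 1); rewrite h addrC subrK.
by case: (nrm m == 0); rewrite ?mul1r ?mul0r.
Qed.

End Formulas.

Section Assembly.
Variable F : finFieldType.
Hypothesis qodd : odd #|F|.
Variable psi : F -> algC.
Hypothesis psiD : forall x y, psi (x + y) = psi x * psi y.
Hypothesis psi0 : psi 0 = 1.
Variable b0 : F.
Hypothesis psib : psi b0 != 1.
Hypothesis psiC : forall x, (psi x)^* = psi (- x).
Variable d : nat.
Variable A : {set 'rV[F]_d}.

Local Notation et := (@et F).
Local Notation PP := (PP psi A).
Local Notation nrm := (@nrm F d).
Local Notation Sf := (Sf A).
Local Notation Sz := (Sz A).

Lemma SQ_sum : ((SQ A)%:R : algC) =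
  \sum_(x in A) \sum_(y in A) ((eta (qdist x y) == 1)%:R : algC).
Proof.
rewrite /SQ -sumr_const.
rewrite (eq_bigl (fun p : 'rV[F]_d * 'rV[F]_d => (p.1 \in A) && (p.2 \in A) && (eta (qdist p.1 p.2) == 1))); last first.
  by move=> p; rewrite !inE andbA.
rewrite big_mkcondr pair_big /=; apply: eq_bigr => p _.
by case: (_ == 1).
Qed.

Lemma pt_eq (t : F) : 2%:R * ((eta t == 1)%:R : algC) = 1 - (t == 0)%:R + et t.
Proof.
rewrite /et; have [->|nz] := eqVneq t 0.
  by rewrite eta0 /= mulr0 subrr addr0.
case: (eta_nz nz) => ->; rewrite /= subr0.
  by rewrite mulr1.
by rewrite mulr0 subrr.
Qed.

Lemma pt_le (t : F) (b : bool) : (b -> t = 0) ->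
  2%:R * ((eta t == 1)%:R : algC) <= 1 - b%:R + et t.
Proof.
case: b => [/(_ isT) ->|_]; first by rewrite /et eta0 /= mulr0 subrr addr0.
rewrite /et subr0; have [->|nz] := eqVneq t 0; first by rewrite eta0 /= mulr0 addr0 ler01.
case: (eta_nz nz) => ->; rewrite /=.
  by rewrite mulr1.
by rewrite mulr0 subrr.
Qed.

Lemma N2E : ((#|A| ^ 2)%:R : algC) = \sum_(x in A) \sum_(y in A) 1.
Proof. by rewrite sumr_const sumr_const -mulrnA mulnn. Qed.

Lemma SQ_eq : 2%:R * (SQ A)%:R = (#|A| ^ 2)%:R - Sz + Sf.
Proof.
rewrite SQ_sum mulr_sumr N2E /Sz /Sf -sumrB -big_split /=; apply: eq_bigr => x _.
rewrite mulr_sumr -sumrB -big_split /=; apply: eq_bigr => y _.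
exact: pt_eq.
Qed.

Lemma SQ_le : 2%:R * (SQ A)%:R <= (#|A| ^ 2)%:R - #|A|%:R + Sf.
Proof.
have NA : (#|A|%:R : algC) = \sum_(x in A) \sum_(y in A) ((x == y)%:R).
  rewrite -sumr_const; apply: eq_bigr => x xA.
  rewrite (bigD1 x) //= eqxx big1 ?addr0 // => y /andP[_ ne].
  by rewrite eq_sym (negbTE ne).
rewrite SQ_sum mulr_sumr N2E NA /Sf -sumrB -big_split /=; apply: ler_sum => x _.
rewrite mulr_sumr -sumrB -big_split /=; apply: ler_sum => y _.
by apply: pt_le => /eqP ->; rewrite qdistE subrr nrm0.
Qed.

Lemma sumPP_bound (c : 'rV[F]_d -> algC) (al be : algC) :
  (forall m, c m <= al + be * (m == 0)%:R) ->
  \sum_m c m * PP m <= al * (#|F| ^ d * #|A|)%:R + be * (#|A| ^ 2)%:R.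
Proof.
move=> hc.
apply: le_trans (_ : \sum_m (al + be * (m == 0)%:R) * PP m <= _).
  apply: ler_sum => m _; apply: ler_wpM2r; [exact: PP_ge0 | exact: hc].
under eq_bigr do rewrite mulrDl -mulrA.
rewrite big_split /= -mulr_sumr -mulr_sumr (sum_PP psiD psi0 psib psiC).
rewrite (bigD1 0) //= eqxx mul1r big1 ?addr0 ?(PP0 psiD psi0 psiC) //.
by move=> m /negbTE ->; rewrite mul0r.
Qed.

Lemma sumPP_boundZ (C : 'rV[F]_d -> int) (Al Be : int) :
  (forall m, C m <= Al + Be * (m == 0)) ->
  \sum_m (C m)%:~R * PP m <= Al%:~R * (#|F| ^ d * #|A|)%:R + Be%:~R * (#|A| ^ 2)%:R.
Proof.
move=> hc; apply: sumPP_bound => m.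
have -> : (Al%:~R + Be%:~R * (m == 0)%:R : algC) = (Al + Be * (m == 0))%:~R.
  by rewrite rmorphD rmorphM.
by rewrite ler_int.
Qed.

Lemma eta_range (a : F) : (-1 <= eta a <= 1) && ((a == 0) ==> (eta a == 0)).
Proof.
have [->|nz] := eqVneq a 0; first by rewrite eta0.
by case: (eta_nz nz) => ->.
Qed.

Hypothesis ev : ~~ odd d.
Local Notation q := (#|F|%:R : algC).
Local Notation h := (#|F|%:R ^+ d./2 : algC).

Lemma Gd_eq : G psi ^+ d = et (-1) ^+ d./2 * h.
Proof.
rewrite -{1}(odd_double_half d) (negbTE ev) add0n -muln2 mulnC exprM.
by rewrite (G2 qodd psiD psi0 psib psiC) exprMn.
Qed.

Lemma case_neg : et (-1) ^+ d./2 = -1 ->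
  2%:R * q * h * (SQ A)%:R <= q * h * (#|A| ^ 2)%:R - h * (#|A| ^ 2)%:R
     + (#|F|%:Z - 1)%:~R * (#|F| ^ d * #|A|)%:R.
Proof.
move=> eps.
have ef := Sf_formula qodd psiD psi0 psib psiC ev A.
have ez := Sz_formula qodd psiD psi0 psib psiC ev A.
rewrite Gd_eq eps in ef ez.
pose C (m : 'rV[F]_d) : int := (nrm m == 0)%:Z * #|F|%:Z - 1 - #|F|%:Z * eta (- nrm m).
have E : 2%:R * q * h * (SQ A)%:R = q * h * (#|A| ^ 2)%:R - h * (#|A| ^ 2)%:R
     + \sum_m (C m)%:~R * PP m.
  have -> : \sum_m (C m)%:~R * PP m =
      \sum_m ((nrm m == 0)%:R * q - 1) * PP m - q * \sum_m et (- nrm m) * PP m.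
    rewrite mulr_sumr -sumrB; apply: eq_bigr => m _.
    rewrite /C !rmorphB !rmorphM /= !rmorph1 /et; ring.
  rewrite -ef; move: ez; set Z := \sum_m _ => ez.
  have -> : Z = (-1 * h) * Sz * q - (-1 * h) * (#|A| ^ 2)%:R by rewrite ez addrC addKr.
  transitivity (q * h * (2%:R * (SQ A)%:R)); first by ring.
  rewrite SQ_eq; ring.
rewrite E; apply: lerD => //.
apply: le_trans (sumPP_boundZ (Al := #|F|%:Z - 1) (Be := 0) _) _; last first.
  by rewrite mul0r addr0.
move=> m; rewrite mul0r addr0 /C.
have := eta_range (- nrm m); rewrite oppr_eq0.
case: (nrm m == 0) => /=; move: (eta (- nrm m)) => e; nia.
Qed.

Lemma nrm_m0 (m : 'rV[F]_d) : (m == 0) ==> (nrm m == 0).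
Proof. by apply/implyP => /eqP ->; rewrite nrm0. Qed.

Lemma case_pos1 : et (-1) ^+ d./2 = 1 ->
  2%:R * q * h * (SQ A)%:R <= q * h * (#|A| ^ 2)%:R - h * (#|A| ^ 2)%:R
     + ((#|F|%:Z + 1)%:~R * (#|F| ^ d * #|A|)%:R + (- (2 * #|F|%:Z))%:~R * (#|A| ^ 2)%:R).
Proof.
move=> eps.
have ef := Sf_formula qodd psiD psi0 psib psiC ev A.
have ez := Sz_formula qodd psiD psi0 psib psiC ev A.
rewrite Gd_eq eps in ef ez.
pose C (m : 'rV[F]_d) : int := 1 - (nrm m == 0)%:Z * #|F|%:Z + #|F|%:Z * eta (- nrm m).
have E : 2%:R * q * h * (SQ A)%:R = q * h * (#|A| ^ 2)%:R - h * (#|A| ^ 2)%:R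
     + \sum_m (C m)%:~R * PP m.
  have -> : \sum_m (C m)%:~R * PP m =
      q * \sum_m et (- nrm m) * PP m - \sum_m ((nrm m == 0)%:R * q - 1) * PP m.
    rewrite mulr_sumr -sumrB; apply: eq_bigr => m _.
    rewrite /C !(rmorphD, rmorphB, rmorphN, rmorphM) /= ?rmorph1 /et; ring.
  rewrite -ef; move: ez; set Z := \sum_m _ => ez.
  have -> : Z = (1 * h) * Sz * q - (1 * h) * (#|A| ^ 2)%:R by rewrite ez addrC addKr.
  transitivity (q * h * (2%:R * (SQ A)%:R)); first by ring.
  rewrite SQ_eq; ring.
rewrite E; apply: lerD => //.
apply: sumPP_boundZ => m; rewrite /C.
have := eta_range (- nrm m); rewrite oppr_eq0.
have := nrm_m0 m.
case: (nrm m == 0); case: (m == 0) => /=; move: (eta (- nrm m)) => e; nia.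
Qed.

Lemma h_ge0 : 0 <= h.
Proof. by rewrite exprn_ge0 ?ler0n. Qed.

Lemma case_pos2 : et (-1) ^+ d./2 = 1 ->
  2%:R * h * (SQ A)%:R <= h * (#|A| ^ 2)%:R - h * #|A|%:R
     + ((1 : int)%:~R * (#|F| ^ d * #|A|)%:R + (-1 : int)%:~R * (#|A| ^ 2)%:R).
Proof.
move=> eps.
have ef := Sf_formula qodd psiD psi0 psib psiC ev A.
rewrite Gd_eq eps mul1r in ef.
rewrite (mulrC 2%:R) -mulrA.
apply: le_trans (ler_wpM2l h_ge0 SQ_le) _.
rewrite mulrDr mulrBr ef; apply: lerD => //.
have -> : \sum_m et (- nrm m) * PP m = \sum_m (eta (- nrm m))%:~R * PP m by [].
apply: sumPP_boundZ => m.
have := eta_range (- nrm m); rewrite oppr_eq0.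
have := nrm_m0 m.
case: (nrm m == 0); case: (m == 0) => /=; move: (eta (- nrm m)) => e; lia.
Qed.

End Assembly.

Lemma oddE (n : nat) : odd n = (n %% 2 == 1)%N.
Proof. by rewrite modn2; case: odd. Qed.

Theorem theorem1p5 (F : finFieldType) (d : nat) (A : {set 'rV[F]_d}) :
  odd #|F| -> (0 < d)%N ->
  (((d %% 4 == 2)%N && (#|F| %% 4 == 3)%N) ->
     (SQ A)%:R <= (#|A|%:R ^+ 2 / 2 + (#|F|%:R ^+ (d./2)) * #|A|%:R / 2
                   - #|A|%:R ^+ 2 / (2 * #|F|%:R)
                   - (#|F|%:R ^+ ((d - 2)./2)) * #|A|%:R / 2 : rat)) /\
  (((d %% 4 == 0)%N || ((d %% 4 == 2)%N && (#|F| %% 4 == 1)%N)) ->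
     ((((#|F|%:R ^+ (d./2) + #|F|%:R) / (1 + (#|F|%:R ^+ ((d - 2)./2))^-1) : rat)
          <= #|A|%:R ->
       (SQ A)%:R <= (#|A|%:R ^+ 2 / 2 + (#|F|%:R ^+ (d./2)) * #|A|%:R / 2
                     - #|A|%:R ^+ 2 / (#|F|%:R ^+ (d./2))
                     - #|A|%:R ^+ 2 / (2 * #|F|%:R)
                     + (#|F|%:R ^+ ((d - 2)./2)) * #|A|%:R / 2 : rat)) /\
      (#|A|%:R <= ((#|F|%:R ^+ (d./2) + #|F|%:R) / (1 + (#|F|%:R ^+ ((d - 2)./2))^-1) : rat) ->
       (SQ A)%:R <= (#|A|%:R ^+ 2 / 2 + (#|F|%:R ^+ (d./2)) * #|A|%:R / 2
                     - #|A|%:R ^+ 2 / (2 * #|F|%:R ^+ (d./2))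
                     - #|A|%:R / 2 : rat)))).
Proof.
move=> qodd d_gt0.
have [psi [psiD psi0 [b0 psib] psiC]] := addchar_exists F.
set d2 := d./2.
have hd2 : (d - 2)./2 = d2.-1.
  by rewrite /d2 -!divn2; lia.
have eps : et (-1 : F) ^+ d2 = (-1) ^+ (odd (kq F) && odd d2).
  by rewrite /et (eta_m1 qodd) rmorphXn /= rmorphN1 -exprM -oddM signr_odd.
have qnz : (#|F|%:R : algC) != 0 by rewrite pnatr_eq0 -lt0n (ltnW (q_gt1 F)).
split.
  move=> /andP[/eqP d4 /eqP q4].
  have ev : ~~ odd d by rewrite oddE; apply/negP => /eqP; lia.
  have d2g : (0 < d2)%N by rewrite /d2 -divn2; lia.
  have oddk : odd (kq F) by rewrite /kq oddE -divn2 -subn1; apply/eqP; lia.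
  have oddd2 : odd d2 by rewrite /d2 oddE -divn2; apply/eqP; lia.
  have e1 : et (-1 : F) ^+ d2 = -1 by rewrite eps oddk oddd2 expr1.
  have H := case_neg qodd psiD psi0 psib psiC A ev e1.
  rewrite -(ler_rat algC).
  rewrite !(rmorphB, rmorphD, rmorphM, fmorphV, rmorphXn, rmorph_nat) /= rmorph1 hd2.
  have dE : d = (d2 * 2)%N by rewrite /d2 -divn2; lia.
  have qdE : (#|F|%:R : algC) ^+ d = (#|F|%:R ^+ d2) ^+ 2 by rewrite -exprM -dE.
  have qd2 : (#|F|%:R : algC) ^+ d2 = #|F|%:R * #|F|%:R ^+ d2.-1.
    by rewrite -exprS prednK.
  move: H; rewrite -/d2 natrM !natrX qdE rmorphB /= !qd2.
  set q := (#|F|%:R : algC); set N := (#|A|%:R : algC); set S := ((SQ A)%:R : algC).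
  set h' := q ^+ d2.-1 => H.
  have h'nz : h' != 0 by rewrite expf_neq0.
  have qpos : 0 < q by rewrite ltr0n (ltnW (q_gt1 F)).
  have h'pos : 0 < h' by rewrite exprn_gt0.
  have pos : 0 < 2%:R * q * (q * h') by rewrite !mulr_gt0 // ltr0n.
  move: H; set B := (X in _ <= X) => H.
  have H2 : S <= B / (2%:R * q * (q * h')) by rewrite ler_pdivlMr // mulrC.
  apply: (le_trans H2); rewrite le_eqVlt; apply/orP; left; apply/eqP.
  rewrite (_ : 1 + 1 = 2%:R) //.
  rewrite /B (_ : ((#|F| : int)%:~R : algC) = q) // rmorph1.
  field.
  by rewrite qnz h'nz.
move=> hc.
have [ev d2g e1] : [/\ ~~ odd d, (0 < d2)%N & et (-1 : F) ^+ d2 = 1].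
  case/orP: hc => [/eqP d4 | /andP[/eqP d4 /eqP q4]].
    have ev : ~~ odd d by rewrite oddE; apply/negP => /eqP; lia.
    have d2g : (0 < d2)%N by rewrite /d2 -divn2; lia.
    have ed2 : ~~ odd d2 by rewrite /d2 oddE -divn2; apply/negP => /eqP; lia.
    by split => //; rewrite eps (negbTE ed2) andbF expr0.
  have ev : ~~ odd d by rewrite oddE; apply/negP => /eqP; lia.
  have d2g : (0 < d2)%N by rewrite /d2 -divn2; lia.
  have ek : ~~ odd (kq F) by rewrite /kq oddE -divn2 -subn1; apply/negP => /eqP; lia.
  by split => //; rewrite eps (negbTE ek) expr0.
have dE : d = (d2 * 2)%N by rewrite /d2 -divn2; move: ev; rewrite oddE => /eqP; lia.
have qdE : (#|F|%:R : algC) ^+ d = (#|F|%:R ^+ d2) ^+ 2 by rewrite -exprM -dE.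
have qd2 : (#|F|%:R : algC) ^+ d2 = #|F|%:R * #|F|%:R ^+ d2.-1.
  by rewrite -exprS prednK.
have qpos : (0 : algC) < #|F|%:R by rewrite ltr0n (ltnW (q_gt1 F)).
have h'pos : (0 : algC) < #|F|%:R ^+ d2.-1 by rewrite exprn_gt0.
split=> _.
  have H := case_pos1 qodd psiD psi0 psib psiC A ev e1.
  rewrite -(ler_rat algC).
  rewrite !(rmorphB, rmorphD, rmorphM, fmorphV, rmorphXn, rmorph_nat) /= rmorph1 hd2.
  move: H; rewrite -/d2 natrM !natrX qdE /= !qd2.
  set q := (#|F|%:R : algC); set N := (#|A|%:R : algC); set S := ((SQ A)%:R : algC).
  set h' := q ^+ d2.-1 => H.
  have h'nz : h' != 0 by rewrite lt0r_neq0.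
  have pos : 0 < 2%:R * q * (q * h') by rewrite !mulr_gt0 // ltr0n.
  move: H; set B := (X in _ <= X) => H.
  have H2 : S <= B / (2%:R * q * (q * h')) by rewrite ler_pdivlMr // mulrC.
  apply: (le_trans H2); rewrite le_eqVlt; apply/orP; left; apply/eqP.
  rewrite /B !(rmorphD, rmorphN, rmorphM) /= ?rmorph1.
  rewrite (_ : ((#|F| : int)%:~R : algC) = q) //.
  field.
  by rewrite qnz h'nz.
have H := case_pos2 qodd psiD psi0 psib psiC A ev e1.
rewrite -(ler_rat algC).
rewrite !(rmorphB, rmorphD, rmorphM, fmorphV, rmorphXn, rmorph_nat) /= rmorph1.
move: H; rewrite -/d2 natrM !natrX qdE /= !qd2.
set q := (#|F|%:R : algC); set N := (#|A|%:R : algC); set S := ((SQ A)%:R : algC).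
set h' := q ^+ d2.-1 => H.
have h'nz : h' != 0 by rewrite lt0r_neq0.
have pos : 0 < 2%:R * (q * h') by rewrite !mulr_gt0 // ltr0n.
move: H; set B := (X in _ <= X) => H.
have H2 : S <= B / (2%:R * (q * h')) by rewrite ler_pdivlMr // mulrC.
apply: (le_trans H2); rewrite le_eqVlt; apply/orP; left; apply/eqP.
rewrite /B !rmorphN /= rmorph1.
field.
by rewrite qnz h'nz.
Qed.
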